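(* Let $\gamma_1,\dots,\gamma_N\in\mathbb{R}$ and $\alpha_1,\dots,\alpha_N>0$, and let $K(t)=\sum_{j=1}^N\gamma_je^{-\alpha_jt}$, whose Laplace transform is $k(\lambda)=\sum_{j=1}^N\frac{\gamma_j}{\lambda+\alpha_j}$. Then $K(t)\ge0$ for all $t\ge0$ if and only if $\sum_{j=1}^N\frac{\gamma_j}{(\lambda+\alpha_j)^m}\ge0$ for every integer $m\ge1$ and every $\lambda>0$. *)

(* Defs.v *)
From Stdlib Require Import Reals List.
Open Scope R_scope.

(* Finite sum over indices j = 0, ..., N-1 (the paper's j = 1..N, shifted). *)
Definition sumN (N : nat) (f : nat -> R) : R :=
  fold_right Rplus 0 (map f (seq 0 N)).

Definition Kexp (N : nat) (gamma alpha : nat -> R) (t : R) : R :=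
  sumN N (fun j => gamma j * exp (- alpha j * t)).

(* Main.v *)
Require Import Defs.
From Stdlib Require Import Reals List Lra Lia.
From Coquelicot Require Import Coquelicot.
Open Scope R_scope.

Lemma fr_ext (f g : nat -> R) l : (forall j, In j l -> f j = g j) ->
  fold_right Rplus 0 (map f l) = fold_right Rplus 0 (map g l).
Proof. induction l as [|a l IH]; simpl; intros H; auto.
  rewrite H by auto. rewrite IH; auto. Qed.

Lemma fr_scal (c : R) (f : nat -> R) l :
  fold_right Rplus 0 (map (fun j => c * f j) l) = c * fold_right Rplus 0 (map f l).
Proof. induction l as [|a l IH]; simpl; [ring|]. rewrite IH; ring. Qed.

Lemma fr_plus (f g : nat -> R) l :
  fold_right Rplus 0 (map (fun j => f j + g j) l) =
  fold_right Rplus 0 (map f l) + fold_right Rplus 0 (map g l).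
Proof. induction l as [|a l IH]; simpl; [ring|]. rewrite IH; ring. Qed.

Lemma fr_lim (u : nat -> nat -> R) (L : nat -> R) l :
  (forall j, In j l -> is_lim_seq (fun n => u n j) (L j)) ->
  is_lim_seq (fun n => fold_right Rplus 0 (map (u n) l)) (fold_right Rplus 0 (map L l)).
Proof. induction l as [|a l IH]; simpl; intros H.
  - apply is_lim_seq_const.
  - apply is_lim_seq_plus'; auto. Qed.

Lemma lim_eq (u : nat -> R) (l l' : R) : is_lim_seq u l -> l = l' -> is_lim_seq u l'.
Proof. intros H ->; exact H. Qed.

Lemma lim_ge0 (u : nat -> R) (l : R) : (forall n, 0 <= u n) -> is_lim_seq u l -> 0 <= l.
Proof. intros H Hl. assert (Hr := is_lim_seq_le (fun _ => 0) u 0 l H (is_lim_seq_const 0) Hl).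
  exact Hr. Qed.

Lemma lim_pow (u : nat -> R) (l : R) m : is_lim_seq u l -> is_lim_seq (fun n => u n ^ m) (l ^ m).
Proof. intros H; induction m as [|m IH]; simpl.
  - apply is_lim_seq_const.
  - apply is_lim_seq_mult'; auto. Qed.

Lemma lim_inv_n (y : R) : is_lim_seq (fun n => y / INR (S n)) 0.
Proof.
  apply lim_eq with (y * 0); [|ring].
  apply is_lim_seq_mult'. apply is_lim_seq_const.
  assert (H := is_lim_seq_inv (fun n => INR (S n)) p_infty).
  simpl in H. apply H. apply (is_lim_seq_incr_1 INR p_infty). apply is_lim_seq_INR.
  discriminate.
Qed.

Lemma D_seq f a l (h : nat -> R) : derivable_pt_lim f a l -> is_lim_seq h 0 ->
  (forall n, h n <> 0) -> is_lim_seq (fun n => (f (a + h n) - f a) / h n) l.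
Proof.
  intros Hd Hh Hn. apply is_lim_seq_spec. intros eps.
  destruct (Hd eps (cond_pos eps)) as [del Hdel].
  apply is_lim_seq_spec in Hh. destruct (Hh del) as [N HN].
  exists N. intros n Hn'. apply Hdel; auto. specialize (HN n Hn'). rewrite Rminus_0_r in HN. exact HN.
Qed.

Lemma exp_lim (y : R) : 0 <= y ->
  is_lim_seq (fun n => (1 + y / INR (S n)) ^ (S n)) (exp y).
Proof.
  intros Hy. destruct (Req_dec y 0) as [->|Hy0].
  - apply is_lim_seq_ext with (fun _ => 1). intros n. unfold Rdiv; rewrite Rmult_0_l, Rplus_0_r, pow1; auto.
    rewrite exp_0. apply is_lim_seq_const.
  - assert (Hpos : forall n, 0 < INR (S n)) by (intro; apply lt_0_INR; lia).
    apply is_lim_seq_ext with (fun n => exp (y * ((ln (1 + y / INR (S n)) - ln 1) / (y / INR (S n))))).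
    + intros n. rewrite <- Rpower_pow. unfold Rpower. f_equal. rewrite ln_1.
      field. split. apply Rgt_not_eq, Hpos. exact Hy0.
      apply Rplus_lt_le_0_compat; [lra|]. apply Rle_mult_inv_pos; auto.
    + apply (is_lim_seq_continuous exp (fun n => y * ((ln (1 + y / INR (S n)) - ln 1) / (y / INR (S n)))) y).
      apply derivable_continuous_pt, derivable_pt_exp.
      apply lim_eq with (y * 1); [|ring]. apply is_lim_seq_mult'. apply is_lim_seq_const.
      apply lim_eq with (/1); [|apply Rinv_1].
      apply (D_seq ln 1 (/1) (fun n => y / INR (S n))).
      apply derivable_pt_lim_ln; lra. apply lim_inv_n.
      intros n. unfold Rdiv. apply Rmult_integral_contrapositive; split; auto.
      apply Rinv_neq_0_compat, Rgt_not_eq, Hpos.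
Qed.

Lemma back_pos (N : nat) (gamma alpha : nat -> R)
  (halpha : forall j, (j < N)%nat -> 0 < alpha j) :
  (forall (m : nat) (lambda : R), (1 <= m)%nat -> 0 < lambda ->
     0 <= sumN N (fun j => gamma j / (lambda + alpha j) ^ m)) ->
  forall t, 0 < t -> 0 <= Kexp N gamma alpha t.
Proof.
  intros H t Ht.
  assert (Hpos : forall n, 0 < INR (S n)) by (intro; apply lt_0_INR; lia).
  apply (lim_ge0 (fun n => sumN N (fun j => gamma j / (1 + alpha j * t / INR (S n)) ^ (S n)))).
  - intros n. unfold sumN.
    rewrite (fr_ext _ (fun j => (INR (S n) / t) ^ (S n) * (gamma j / (INR (S n) / t + alpha j) ^ (S n)))).
    + rewrite fr_scal. apply Rmult_le_pos. apply pow_le. apply Rlt_le, Rdiv_lt_0_compat; auto.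
      apply H. lia. apply Rdiv_lt_0_compat; auto.
    + intros j Hj. apply in_seq in Hj. assert (Ha := halpha j ltac:(lia)).
      specialize (Hpos n).
      replace (INR (S n) / t + alpha j) with ((INR (S n) / t) * (1 + alpha j * t / INR (S n))) by (field; lra).
      rewrite Rpow_mult_distr. field. split.
      apply pow_nonzero. assert (0 < alpha j * t / INR (S n)) by (apply Rdiv_lt_0_compat; nra). lra.
      apply pow_nonzero. assert (0 < INR (S n) / t) by (apply Rdiv_lt_0_compat; nra). lra.
  - unfold Kexp, sumN. apply fr_lim. intros j Hj. apply in_seq in Hj. assert (Ha := halpha j ltac:(lia)).
    apply lim_eq with (gamma j * / exp (alpha j * t)).
    + unfold Rdiv. apply is_lim_seq_mult'. apply is_lim_seq_const.
      apply (is_lim_seq_inv _ (exp (alpha j * t))). apply exp_lim. nra.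
      simpl. intro E. injection E. apply Rgt_not_eq, exp_pos.
    + rewrite <- exp_Ropp, Ropp_mult_distr_l. reflexivity.
Qed.

Lemma back (N : nat) (gamma alpha : nat -> R)
  (halpha : forall j, (j < N)%nat -> 0 < alpha j) :
  (forall (m : nat) (lambda : R), (1 <= m)%nat -> 0 < lambda ->
     0 <= sumN N (fun j => gamma j / (lambda + alpha j) ^ m)) ->
  forall t, 0 <= t -> 0 <= Kexp N gamma alpha t.
Proof.
  intros H t Ht. destruct (Rle_lt_or_eq_dec _ _ Ht) as [Ht'|<-].
  - apply back_pos; auto.
  - apply (lim_ge0 (fun n => Kexp N gamma alpha (1 / INR (S n)))).
    + intros n. apply back_pos; auto. apply Rdiv_lt_0_compat; [lra|]. apply lt_0_INR; lia.
    + unfold Kexp, sumN. apply fr_lim. intros j _.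
      apply is_lim_seq_mult'. apply is_lim_seq_const.
      apply (is_lim_seq_continuous exp (fun n => - alpha j * (1 / INR (S n)))).
      apply derivable_continuous_pt, derivable_pt_exp.
      apply is_lim_seq_mult'. apply is_lim_seq_const. apply lim_inv_n.
Qed.

Inductive PE : (R -> R) -> Prop :=
| pe_exp (w s : R) : 0 <= w -> 0 <= s -> PE (fun c => w * exp (- c * s))
| pe_plus f g : PE f -> PE g -> PE (fun c => f c + g c)
| pe_ext f g : PE f -> (forall c, f c = g c) -> PE g.

Lemma pe_mul_exp w s : 0 <= w -> 0 <= s -> forall g, PE g ->
  PE (fun c => (w * exp (- c * s)) * g c).
Proof.
  intros Hw Hs g Hg; induction Hg.
  - apply pe_ext with (fun c => (w * w0) * exp (- c * (s + s0))).
    apply pe_exp. nra. lra. intros c. replace (- c * (s + s0)) with (- c * s + - c * s0) by ring.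
    rewrite exp_plus. ring.
  - apply pe_ext with (fun c => w * exp (- c * s) * f c + w * exp (- c * s) * g c).
    apply pe_plus; auto. intros; ring.
  - apply pe_ext with (fun c => w * exp (- c * s) * f c); auto. intros c; rewrite H; auto.
Qed.

Lemma pe_mul f g : PE f -> PE g -> PE (fun c => f c * g c).
Proof.
  intros Hf Hg; induction Hf.
  - apply pe_mul_exp; auto.
  - apply pe_ext with (fun c => f c * g c + g0 c * g c). apply pe_plus; auto. intros; ring.
  - apply pe_ext with (fun c => f c * g c); auto. intros c; rewrite H; auto.
Qed.

Lemma pe_pow f m : PE f -> PE (fun c => f c ^ S m).
Proof.
  intros Hf; induction m.
  - apply pe_ext with f; auto. intros; simpl; ring.
  - apply pe_ext with (fun c => f c * f c ^ S m). apply pe_mul; auto. intros; reflexivity.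
Qed.

Lemma pe_geo h M : 0 <= h -> PE (fun c => sum_f_R0 (fun k => h * exp (- c * (h * INR k))) M).
Proof.
  intros Hh; induction M.
  - apply pe_ext with (fun c => h * exp (- c * (h * INR 0))). apply pe_exp; auto. simpl; lra.
    intros; reflexivity.
  - apply pe_ext with (fun c => sum_f_R0 (fun k => h * exp (- c * (h * INR k))) M + h * exp (- c * (h * INR (S M)))).
    apply pe_plus; auto. apply pe_exp; auto. apply Rmult_le_pos; auto. apply pos_INR.
    intros; reflexivity.
Qed.

Lemma pe_sum (N : nat) (gamma alpha : nat -> R) lambda :
  0 <= lambda ->
  (forall t : R, 0 <= t -> 0 <= Kexp N gamma alpha t) ->
  forall g, PE g -> 0 <= sumN N (fun j => gamma j * g (lambda + alpha j)).
Proof.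
  intros Hl HK g Hg; induction Hg; unfold sumN in *.
  - rewrite (fr_ext _ (fun j => (w * exp (- lambda * s)) * (gamma j * exp (- alpha j * s)))).
    rewrite fr_scal. apply Rmult_le_pos. apply Rmult_le_pos; auto. apply Rlt_le, exp_pos.
    apply HK; auto.
    intros j _. replace (- (lambda + alpha j) * s) with (- lambda * s + - alpha j * s) by ring.
    rewrite exp_plus; ring.
  - rewrite (fr_ext _ (fun j => gamma j * f (lambda + alpha j) + gamma j * g (lambda + alpha j))).
    rewrite fr_plus; lra. intros; ring.
  - rewrite (fr_ext _ (fun j => gamma j * f (lambda + alpha j))); auto.
    intros; rewrite H; auto.
Qed.

Definition hN (n : nat) := 1 / INR (S n).
Definition MN (n : nat) := (S n * S n)%nat.

Lemma geo_closed c h M : 0 < c -> 0 < h ->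
  sum_f_R0 (fun k => h * exp (- c * (h * INR k))) M =
  (1 - exp (- c * (h * INR (S M)))) * (/ c * / ((exp (- c * h) - 1) / (- c * h))).
Proof.
  intros Hc Hh.
  assert (Hq : exp (- c * h) < 1). { rewrite <- exp_0. apply exp_increasing. nra. }
  assert (Hpow : forall k, exp (- c * (h * INR k)) = exp (- c * h) ^ k).
  { intros k. rewrite <- Rpower_pow by apply exp_pos. unfold Rpower. rewrite ln_exp. f_equal; ring. }
  rewrite (sum_eq _ (fun k => exp (- c * h) ^ k * h)) by (intros; rewrite Hpow; ring).
  rewrite <- scal_sum, tech3 by lra. rewrite Hpow. field. repeat split; try lra.
Qed.

Lemma s_lim c : 0 < c ->
  is_lim_seq (fun n => sum_f_R0 (fun k => hN n * exp (- c * (hN n * INR k))) (MN n)) (/ c).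
Proof.
  intros Hc.
  assert (Hpos : forall n, 0 < INR (S n)) by (intro; apply lt_0_INR; lia).
  assert (Hh : forall n, 0 < hN n) by (intro n; unfold hN; apply Rdiv_lt_0_compat; auto; lra).
  apply is_lim_seq_ext with (fun n => (1 - exp (- c * (hN n * INR (S (MN n))))) *
     (/ c * / ((exp (- c * hN n) - 1) / (- c * hN n)))).
  { intros n. rewrite geo_closed; auto. }
  apply lim_eq with ((1 - 0) * (/ c * / 1)); [|field; lra].
  apply is_lim_seq_mult'.
  - apply is_lim_seq_minus'. apply is_lim_seq_const.
    apply (is_lim_comp_seq exp _ m_infty 0). apply is_lim_exp_m.
    exists O; intros; discriminate.
    apply (is_lim_seq_le_m_loc (fun n => - c * INR n)).
    + exists O. intros n _. specialize (Hpos n). apply Rmult_le_compat_neg_l. lra.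
      unfold hN, MN. rewrite (S_INR (S n * S n)), (mult_INR (S n)), S_INR.
      rewrite S_INR in Hpos. assert (0 <= INR n) by apply pos_INR.
      apply (Rmult_le_reg_r (INR n + 1)); auto. field_simplify; nra.
    + assert (Hm : Rbar_mult (- c) p_infty = m_infty).
      { simpl. case Rle_dec; intro; [exfalso; lra|reflexivity]. }
      rewrite <- Hm. apply (is_lim_seq_scal_l INR (- c) p_infty). apply is_lim_seq_INR.
  - apply is_lim_seq_mult'. apply is_lim_seq_const.
    assert (Hl : is_lim_seq (fun n => (exp (- c * hN n) - 1) / (- c * hN n)) 1).
    { apply (is_lim_comp_seq (fun y => (exp y - 1) / y) (fun n => - c * hN n) 0 1).
      apply is_lim_div_expm1_0.
      exists O. intros n _. intro E. injection E. specialize (Hh n). nra.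
      apply lim_eq with (- c * 0); [|ring]. apply is_lim_seq_mult'. apply is_lim_seq_const.
      apply lim_inv_n. }
    assert (H := is_lim_seq_inv _ 1 Hl). simpl in H. apply H. intro E; injection E; lra.
Qed.

Theorem lemma5p1 (N : nat) (gamma alpha : nat -> R)
  (halpha : forall j, (j < N)%nat -> 0 < alpha j) :
  (forall t : R, 0 <= t -> 0 <= Kexp N gamma alpha t) <->
  (forall (m : nat) (lambda : R), (1 <= m)%nat -> 0 < lambda ->
     0 <= sumN N (fun j => gamma j / (lambda + alpha j) ^ m)).
Proof.
  split; [|apply back; auto].
  intros HK m lambda Hm Hl. destruct m as [|m']; [lia|].
  apply (lim_ge0 (fun n => sumN N (fun j => gamma j *
     (fun c => sum_f_R0 (fun k => hN n * exp (- c * (hN n * INR k))) (MN n) ^ S m') (lambda + alpha j)))).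
  - intros n. apply (pe_sum N gamma alpha lambda ltac:(lra) HK (fun c => sum_f_R0 (fun k => hN n * exp (- c * (hN n * INR k))) (MN n) ^ S m')). apply pe_pow. apply pe_geo.
    unfold hN. apply Rlt_le, Rdiv_lt_0_compat; [lra|]. apply lt_0_INR; lia.
  - unfold sumN. apply fr_lim. intros j Hj. apply in_seq in Hj. assert (Ha := halpha j ltac:(lia)).
    apply lim_eq with (gamma j * (/ (lambda + alpha j)) ^ S m').
    + apply is_lim_seq_mult'. apply is_lim_seq_const. apply lim_pow. apply s_lim. lra.
    + rewrite pow_inv. reflexivity.
Qed.
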